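(* Let $p,q$ be nonzero integers such that $q$ does not divide $2p$. Then the group $G_{p,q}=\langle a,b,s,t\mid [a,b],\ s^{-1}a^qs=a^pb,\ t^{-1}a^qt=a^pb^{-1}\rangle$ is not residually finite. *)

(* Defs.v *)
From HB Require Import structures.
From mathcomp Require Import all_boot all_order all_algebra all_fingroup.
Set Implicit Arguments. Unset Strict Implicit. Unset Printing Implicit Defensive.

Inductive word (X : Type) : Type :=
  | W1 : word X
  | Wgen : X -> word X
  | Wmul : word X -> word X -> word X
  | Winv : word X -> word X.
Arguments W1 {X}.

Definition wpow X (w : word X) (z : int) : word X :=
  match z with
  | Posz n => iter n (Wmul w) W1
  | Negz n => Winv (iter n.+1 (Wmul w) W1)
  end.

Definition wcomm X (u v : word X) : word X :=
  Wmul (Wmul (Wmul (Winv u) (Winv v)) u) v.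

(* Equality in the group <X | rels>: the smallest congruence on words
   containing the group axioms and the relations (l = r) for (l, r) in rels.
   [weq rels u v] means u and v represent the same element of the
   presented group. *)
Inductive weq X (rels : (word X * word X) -> Prop) : word X -> word X -> Prop :=
  | weq_refl u : weq rels u u
  | weq_sym u v : weq rels u v -> weq rels v u
  | weq_trans u v w : weq rels u v -> weq rels v w -> weq rels u w
  | weq_mul u u' v v' : weq rels u u' -> weq rels v v' ->
      weq rels (Wmul u v) (Wmul u' v')
  | weq_inv u u' : weq rels u u' -> weq rels (Winv u) (Winv u')
  | weq_assoc u v w : weq rels (Wmul (Wmul u v) w) (Wmul u (Wmul v w))
  | weq_mul1w u : weq rels (Wmul W1 u) u
  | weq_mulw1 u : weq rels (Wmul u W1) u
  | weq_mulVw u : weq rels (Wmul (Winv u) u) W1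
  | weq_mulwV u : weq rels (Wmul u (Winv u)) W1
  | weq_rel l r : rels (l, r) -> weq rels l r.

Fixpoint weval X (gT : finGroupType) (f : X -> gT) (w : word X) : gT :=
  match w with
  | W1 => 1%g
  | Wgen x => f x
  | Wmul u v => (weval f u * weval f v)%g
  | Winv u => ((weval f u)^-1)%g
  end.

(* Homomorphisms from <X | rels> to a finite group gT correspond exactly to
   assignments f : X -> gT satisfying the relations. *)
Definition respects X (rels : (word X * word X) -> Prop)
  (gT : finGroupType) (f : X -> gT) : Prop :=
  forall l r, rels (l, r) -> weval f l = weval f r.

Definition residually_finite X (rels : (word X * word X) -> Prop) : Prop :=
  forall w : word X, ~ weq rels w W1 ->
    exists (gT : finGroupType) (f : X -> gT),
      respects rels f /\ weval f w <> 1%g.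

Inductive genG := ga | gb | gs | gt.

Definition Gpq_rels (p q : int) : (word genG * word genG) -> Prop :=
  fun lr =>
    let a := Wgen ga in let b := Wgen gb in
    let s := Wgen gs in let t := Wgen gt in
    lr = (wcomm a b, W1)
    \/ lr = (Wmul (Wmul (Winv s) (wpow a q)) s, Wmul (wpow a p) b)
    \/ lr = (Wmul (Wmul (Winv t) (wpow a q)) t, Wmul (wpow a p) (Winv b)).

(* Main.v *)
Require Import Defs.
From mathcomp Require Import all_boot all_order all_algebra all_fingroup.
From mathcomp Require Import cyclic.
From mathcomp Require Import ring lra zify.
Import Order.TTheory GRing.Theory Num.Theory.
Local Open Scope ring_scope.

Definition dl := (bool * bool)%type.
Definition dinv (d : dl) : dl := (d.1, ~~ d.2).
Lemma dinvK d : dinv (dinv d) = d. Proof. by case: d => [[] []]. Qed.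
Definition item := (int * dl)%type.

Definition Mo (al : dl -> int) d : int := `|al d|.
Definition Ca (al : dl -> int) d : int := Num.sg (al d) * al (dinv d).

Fixpoint actA al (n : int) (x : seq item) : seq item :=
  match x with
  | [::] => [::]
  | (i, d) :: r => (((i + n) %% Mo al d)%Z, d) :: actA al (((i + n) %/ Mo al d)%Z * Ca al d) r
  end.

Definition actS (d : dl) (x : seq item) : seq item :=
  match x with
  | (i, e) :: r => if (i == 0) && (e == dinv d) then r else (0, d) :: x
  | [::] => [:: (0, d)]
  end.

Definition nb (d : dl) (r : seq item) : bool :=
  match r with (j, e) :: _ => ~~ ((j == 0) && (e == dinv d)) | [::] => true end.

Fixpoint normal al (x : seq item) : bool :=
  match x with
  | [::] => true
  | (i, d) :: r => [&& 0 <= i, i < Mo al d, nb d r & normal al r]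
  end.

Section M.
Variable al : dl -> int.
Hypothesis alnz : forall d, al d != 0.

Lemma Mo_gt0 d : 0 < Mo al d. Proof. by rewrite /Mo normr_gt0. Qed.
Lemma Mo_nz d : Mo al d != 0. Proof. by rewrite gt_eqF ?Mo_gt0. Qed.

Lemma modMo m d : (m %% Mo al d)%Z = (m %% al d)%Z.
Proof. by rewrite /Mo -abszE modz_abs. Qed.

Lemma size_actA n x : size (actA al n x) = size x.
Proof. by elim: x n => [|[i d] r IH] n //=; rewrite IH. Qed.

Lemma actA_add n k x : actA al n (actA al k x) = actA al (n + k) x.
Proof.
elim: x n k => [|[i d] r IH] n k //=.
rewrite IH modzDml addrA; congr ((_, _) :: actA _ _ _); first by rewrite addrAC.
rewrite -mulrDl; congr (_ * _).
have -> : i + n + k = ((i + k) %/ Mo al d)%Z * Mo al d + (((i + k) %% Mo al d)%Z + n).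
  by rewrite addrA -divz_eq addrAC.
by rewrite divzMDl ?Mo_nz // addrC.
Qed.

Lemma actA0 x : normal al x -> actA al 0 x = x.
Proof.
elim: x => [|[i d] r IH] //= /and4P[i0 iM _ nr].
rewrite addr0 modz_small ?i0 // divz_small ?mul0r ?IH //.
by rewrite i0 gez0_abs // ltW ?Mo_gt0.
Qed.

Lemma modsmall j d : 0 <= j < Mo al d -> (j %% Mo al d)%Z = j.
Proof. by move=> h; rewrite modz_small. Qed.

Lemma normal_actA n x : normal al x -> normal al (actA al n x).
Proof.
elim: x n => [|[i d] r IH] n //= /and4P[i0 iM nbr nr].
rewrite modz_ge0 ?Mo_nz // ltz_pmod ?Mo_gt0 // IH // andbT /=.
case: r nbr nr {IH} => [|[j e] r'] //= nbr /and4P[j0 jM _ _].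
apply: contra nbr => /andP[/eqP h /eqP ed]; rewrite ed eqxx andbT.
subst e; move: h; rewrite modMo /Ca mulrA addrC modzMDl -modMo modz_small.
  by move->.
by rewrite j0.
Qed.

Lemma normal_tail i d r : normal al ((i, d) :: r) -> normal al r.
Proof. by case/and4P. Qed.

Lemma normal_actS d x : normal al x -> normal al (actS d x).
Proof.
case: x => [|[i e] r] /=; first by rewrite Mo_gt0.
case: ifP => [_ |h] nx; first exact: normal_tail nx.
by rewrite /= ?lexx Mo_gt0 /= h nx.
Qed.

Lemma actSK d x : normal al x -> actS (dinv d) (actS d x) = x.
Proof.
case: x => [|[i e] r] /=; first by rewrite dinvK eqxx.
case: ifP => [/andP[/eqP -> /eqP ->] | h] /=; last by rewrite dinvK !eqxx.
case/and3P=> _ nbr _; case: r nbr => [|[j e'] r'] //= nbr.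
by rewrite (negbTE nbr).
Qed.

Lemma sg_div_abs (z : int) : z != 0 -> (z %/ `|z|)%Z * Num.sg z = 1.
Proof.
move=> nz; case: (ltrgtP z 0) => h.
- by rewrite ltr0_norm // divzN divzz nz ltr0_sg // mulrNN mulr1.
- by rewrite gtr0_norm // divzz nz gtr0_sg // mulr1.
- by rewrite h eqxx in nz.
Qed.


Lemma carry_self d : ((al d) %/ Mo al d)%Z * Ca al d = al (dinv d).
Proof. by rewrite /Mo /Ca mulrA sg_div_abs // mul1r. Qed.

Lemma mod_self d : ((al d) %% Mo al d)%Z = 0.
Proof. by rewrite modMo modzz. Qed.

Lemma rel_gen d x : normal al x ->
  actS (dinv d) (actA al (al d) (actS d x)) = actA al (al (dinv d)) x.
Proof.
have nocancel : forall y, actS (dinv d) (actA al (al d) ((0, d) :: y)) = actA al (al (dinv d)) y.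
  by move=> y /=; rewrite add0r mod_self carry_self /= dinvK eqxx.
case: x => [|[i e] r]; first by move=> _; exact: nocancel.
have -> : actS d ((i, e) :: r) = if (i == 0) && (e == dinv d) then r else (0, d) :: (i, e) :: r by [].
case: ifP => [/andP[/eqP -> /eqP ->] | h] nx; last exact: nocancel.
rewrite [actA _ _ (_ :: r)]/= add0r mod_self carry_self dinvK.
move: nx => /and4P[_ _ nbr nr].
case: r nbr nr => [|[j e'] r'] //= nbr /and4P[j0 jM _ _].
rewrite dinvK; case: ifP => // /andP[/eqP h0 /eqP ed]; subst e'.
move: nbr; rewrite dinvK eqxx andbT => /negP; case.
by move: h0; rewrite modMo modzDr -modMo modz_small ?j0 // => ->.
Qed.


Variable m : int.

Definition genf (b : bool) (g : genG) : seq item -> seq item :=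
  match g with
  | ga => actA al (if b then -1 else 1)
  | gb => actA al (if b then - m else m)
  | gs => actS (false, ~~ b)
  | gt => actS (true, ~~ b)
  end.

Fixpoint ev (b : bool) (w : word genG) : seq item -> seq item :=
  match w with
  | W1 => id
  | Wgen g => genf b g
  | Wmul u v => if b then (fun x => ev b v (ev b u x)) else (fun x => ev b u (ev b v x))
  | Winv u => ev (~~ b) u
  end.

Lemma ev_good w : forall b x, normal al x ->
  normal al (ev b w x) /\ ev (~~ b) w (ev b w x) = x.
Proof.
elim: w => [|g|u IHu v IHv|u IHu] b x nx /=.
- by [].
- case: g => /=.
  + split; first exact: normal_actA.
    by rewrite actA_add; case: b; rewrite ?subrr ?addrN ?addNr actA0.
  + split; first exact: normal_actA.
    by rewrite actA_add; case: b; rewrite ?subrr ?addrN ?addNr actA0.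
  + by split; [exact: normal_actS | exact: (actSK (false, ~~ b))].
  + by split; [exact: normal_actS | exact: (actSK (true, ~~ b))].
- case: b.
  + have [n1 e1] := IHu true x nx; have [n2 e2] := IHv true _ n1.
    by split => //=; rewrite e2 e1.
  + have [n1 e1] := IHv false x nx; have [n2 e2] := IHu false _ n1.
    by split => //=; rewrite e2 e1.
- have [n1 e1] := IHu (~~ b) x nx; split => //.
  all: try by move: e1; rewrite negbK.
Qed.

Definition Rel (u v : word genG) := forall b x, normal al x -> ev b u x = ev b v x.

Lemma Rel_false u v : (forall x, normal al x -> ev false u x = ev false v x) -> Rel u v.
Proof.
move=> h [] x nx; last exact: h.
have [n1 _] := ev_good u true _ nx.
have [_ e2] := ev_good v false _ n1.
have [_ e3] := ev_good u true _ nx.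
by rewrite -[LHS]e2 /= -h // e3.
Qed.

Lemma weq_Rel (rels : word genG * word genG -> Prop) :
  (forall l r, rels (l, r) -> Rel l r) ->
  forall u v, weq rels u v -> Rel u v.
Proof.
move=> hr u v; elim => {u v}.
- by [].
- by move=> u v _ h b x nx; rewrite h.
- by move=> u v w _ h1 _ h2 b x nx; rewrite h1 // h2.
- move=> u u' v v' _ h1 _ h2 [] x nx /=.
  + have [n1 _] := ev_good u true _ nx.
    by rewrite h1 // h2 // -h1.
  + have [n1 _] := ev_good v false _ nx.
    by rewrite h2 // h1 // -h2.
- by move=> u u' _ h b x nx /=; rewrite h.
- by move=> u v w [] x nx.
- by move=> u [] x nx.
- by move=> u [] x nx.
- by move=> u [] x nx /=; have [_ ->] := ev_good u false _ nx.
- by move=> u [] x nx /=; have [_ ->] := ev_good u true _ nx.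
- exact: hr.
Qed.


Lemma ev_iter n x : normal al x ->
  ev false (iter n (Wmul (Wgen ga)) W1) x = actA al n%:Z x /\ ev true (iter n (Wmul (Wgen ga)) W1) x = actA al (- n%:Z) x.
Proof.
elim: n x => [|n IH] x nx /=; first by rewrite oppr0 actA0.
have [-> _] := IH x nx.
have [_ ->] := IH _ (normal_actA (-1) _ nx).
by split; rewrite !actA_add intS // opprD addrC.
Qed.

Lemma ev_wpow z x : normal al x -> ev false (wpow (Wgen ga) z) x = actA al z x.
Proof.
case: z => n nx /=; first by have [] := ev_iter n _ nx.
have [_ ->] := ev_iter n _ (normal_actA (-1) _ nx).
by rewrite actA_add NegzE intS opprD addrC.
Qed.

End M.

Definition alpq (p q : int) (d : dl) : int :=
  if d.2 then q else if d.1 then - (2 * p) else 4 * p.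

Lemma alpq_nz (p q : int) : p != 0 -> q != 0 -> forall d, alpq p q d != 0.
Proof.
by move=> p0 q0 [[] []]; rewrite /alpq /= ?oppr_eq0 ?mulf_neq0.
Qed.

Lemma rels_Rel (p q : int) : p != 0 -> q != 0 ->
  forall l r, Gpq_rels p q (l, r) -> Rel (alpq p q) (3 * p) l r.
Proof.
move=> p0 q0; have nz := alpq_nz _ _ p0 q0.
move=> l r H; apply: (@Rel_false _ nz) => x nx.
case: H => [|[|]] [-> ->] /=.
- rewrite !actA_add //.
  have -> : -1 - 3 * p + 1 + 3 * p = 0 by ring.
  exact: actA0.
- rewrite (@ev_wpow _ nz (3 * p) q _ (@normal_actS _ nz (false, true) _ nx)).
  rewrite (@ev_wpow _ nz (3 * p) p _ (@normal_actA _ nz (3 * p) _ nx)) actA_add //.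
  have h := @rel_gen _ nz (false, true) x nx.
  rewrite [alpq p q (false, true)]/= /dinv /= in h; rewrite h.
  by congr actA; rewrite /alpq /=; ring.
- rewrite (@ev_wpow _ nz (3 * p) q _ (@normal_actS _ nz (true, true) _ nx)).
  rewrite (@ev_wpow _ nz (3 * p) p _ (@normal_actA _ nz (- (3 * p)) _ nx)) actA_add //.
  have h := @rel_gen _ nz (true, true) x nx.
  rewrite [alpq p q (true, true)]/= /dinv /= in h; rewrite h.
  by congr actA; rewrite /alpq /=; ring.
Qed.

Lemma ev_iter_size (al : dl -> int) m b n y :
  size (ev al m b (iter n (Wmul (Wgen ga)) W1) y) = size y.
Proof.
elim: n b y => [|n IH] b y //=.
by case: b; rewrite /= ?IH size_actA ?IH.
Qed.

Lemma ev_wpow_size (al : dl -> int) m b z y :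
  size (ev al m b (wpow (Wgen ga) z) y) = size y.
Proof.
case: z => n; first exact: ev_iter_size.
exact: (ev_iter_size al m (~~ b) n.+1 y).
Qed.

Definition wit (p : int) : word genG :=
  wcomm (wpow (Wgen ga) (2%:Z * p)) (Wmul (Wmul (Wgen gs) (Wgen ga)) (Winv (Wgen gs))).

Lemma wit_nontriv (p q : int) : p != 0 -> q != 0 -> ~~ (q %| 2%:Z * p)%Z ->
  ~ weq (Gpq_rels p q) (wit p) W1.
Proof.
move=> p0 q0 ndiv h.
have nz := alpq_nz _ _ p0 q0.
have R := @weq_Rel (alpq p q) nz (3 * p) _ (@rels_Rel p q p0 q0) _ _ h false [::] isT.
move: R; rewrite /wit /wcomm /=.
have m1 : ((0 + 1) %% Mo (alpq p q) (false, false))%Z = 1.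
  rewrite add0r modz_small // /Mo /alpq /=; lia.
rewrite m1 /=.
rewrite (@ev_wpow _ nz) //; last by rewrite /= /Mo /alpq /=; lia.
rewrite /=.
have e0 : (((0 + 2%Z * p) %% Mo (alpq p q) (false, true))%Z == 0) = false.
  rewrite add0r modMo /=; apply/negbTE; apply: contra ndiv => /eqP e.
  exact/dvdz_mod0P.
rewrite e0 /=.
have f0 : (((0 + -1) %% Mo (alpq p q) (false, false))%Z == 0) = false.
  rewrite add0r; apply/negbTE/negP => /eqP/dvdz_mod0P.
  rewrite dvdzE /= dvdn1 /Mo /alpq /=; lia.
rewrite f0 /= => /(congr1 size); rewrite ev_wpow_size.
by [].
Qed.

Definition E (gT : finGroupType) (X : gT) (z : int) : gT :=
  (X ^+ `|(z %% #[X]%g%:Z)%Z|%N)%g.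

Arguments E {gT} X z.
Section EL.
Variable gT : finGroupType.
Implicit Types X : gT.

Lemma Npos X : (0 < #[X]%g%:Z). Proof. by rewrite ltz_nat order_gt0. Qed.

Lemma Eabs X z : (`|(z %% #[X]%g%:Z)%Z|%N : int) = (z %% #[X]%g%:Z)%Z.
Proof. by rewrite gez0_abs // modz_ge0 // gt_eqF ?Npos. Qed.

Lemma Ekey X (a b : nat) : (a%:Z %% #[X]%g%:Z = b%:Z %% #[X]%g%:Z)%Z -> (X ^+ a = X ^+ b)%g.
Proof.
move=> h; rewrite -(expg_mod_order X a) -(expg_mod_order X b).
by congr (_ ^+ _)%g; apply/eqP; rewrite -eqz_nat -!modz_nat h.
Qed.

Lemma EE X z (a : nat) : (a%:Z %% #[X]%g%:Z = z %% #[X]%g%:Z)%Z -> E X z = (X ^+ a)%g.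
Proof. by move=> h; apply: Ekey; rewrite Eabs modz_mod h. Qed.

Lemma Emod X x y : (x %% #[X]%g%:Z = y %% #[X]%g%:Z)%Z -> E X x = E X y.
Proof. by rewrite /E => ->. Qed.

Lemma EX X x (k : nat) : ((E X x) ^+ k)%g = E X (x * k%:Z).
Proof.
rewrite /E -expgM; symmetry; apply: EE.
by rewrite PoszM Eabs modzMml.
Qed.

Lemma E1 X x : (#[X]%g%:Z %| x)%Z -> E X x = 1%g.
Proof. by move/dvdz_mod0P; rewrite /E => ->. Qed.

Lemma E1r X x : E X x = 1%g -> (#[X]%g%:Z %| x)%Z.
Proof.
rewrite /E => /eqP; rewrite -order_dvdn => hd.
apply/dvdz_mod0P; apply/eqP; rewrite -Eabs eqz_nat; apply/eqP.
apply/eqP; apply: contraTT hd => nz; rewrite gtnNdvd // ?lt0n //.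
by rewrite -ltz_nat Eabs ltz_pmod ?Npos.
Qed.

Lemma wpowE (f : genG -> gT) w z : weval f (wpow w z) = E (weval f w) z.
Proof.
set X := weval f w.
have iterE n : weval f (iter n (Wmul w) W1) = (X ^+ n)%g.
  by elim: n => [|n IH] //=; rewrite IH expgS.
case: z => n /=.
  by rewrite iterE; symmetry; apply: EE.
rewrite -/X iterE -expgS; apply: (mulIg (X ^+ n.+1)%g); rewrite mulVg.
rewrite /E -expgD -(expg0 X); apply: Ekey.
by rewrite PoszD Eabs modzDml NegzE addNr.
Qed.
End EL.


Lemma commuteJ' (gT : finGroupType) (x y z : gT) : commute x y -> commute (x ^ z)%g (y ^ z)%g.
Proof. by move=> c; rewrite /commute -!conjMg c. Qed.

Lemma finite_kill (gT : finGroupType) (f : genG -> gT) (p q : int) :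
  q != 0 -> respects (Gpq_rels p q) f -> weval f (wit p) = 1%g.
Proof.
move=> q0 resp.
have h1 := resp _ _ (or_introl erefl).
have h2 := resp _ _ (or_intror (or_introl erefl)).
have h3 := resp _ _ (or_intror (or_intror erefl)).
move: h1 h2 h3 => /=; rewrite !wpowE /=.
set A := f ga; set B := f gb; set S := f gs; set T := f gt.
move=> h1 h2 h3.
set N := #[A]%g.
set g := gcdn N `|q|%N.
have gN : (g %| N)%N by exact: dvdn_gcdl.
have gq : (g %| `|q|)%N by exact: dvdn_gcdr.
set k := (N %/ g)%N.
have kgN : (k * g = N)%N by rewrite divnK.
have k0 : (0 < k)%N.
  by rewrite lt0n; apply/eqP => k0; move: kgN; rewrite k0 mul0n => /esym/eqP; rewrite gtn_eqF ?order_gt0.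
have NE : (N%:Z = g%:Z * k%:Z) by rewrite -PoszM mulnC kgN.
have step1 : ((E A q) ^+ k)%g = 1%g.
  by rewrite EX; apply: E1; rewrite -/N NE dvdz_mul ?dvdzz.
have cAB : commute A B.
  by apply/commgP/eqP; rewrite /commg /conjg !mulgA.
have cPB : commute (E A p) B by apply: commute_sym; apply: commuteX; apply: commute_sym.
have st2 : ((E A p * B) ^+ k)%g = 1%g.
  by rewrite -h2 -mulgA -conjgE -conjXg step1 conj1g.
have st3 : ((E A p * B^-1) ^+ k)%g = 1%g.
  by rewrite -h3 -mulgA -conjgE -conjXg step1 conj1g.
rewrite expgMn // in st2.
rewrite expgMn ?expVgn in st3; last exact: commuteV.
have ePB : ((E A p) ^+ k = B ^+ k)%g.
  by apply/eqP; rewrite -[(B ^+ k)%g]invgK -mulg_eq1 st3.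
rewrite -ePB -expgD EX in st2.
have d2p : (g%:Z %| 2%:Z * p)%Z.
  have := @E1r _ _ _ st2; rewrite -/N NE -(dvdz_mul2r (p := k%:Z)); last by rewrite eqz_nat -lt0n.
  have -> : p * ((k + k)%N)%:Z = 2%:Z * p * k%:Z by rewrite PoszD; ring.
  by [].
have [u [v huv]] := Bezoutz N%:Z q.
have gz : gcdz N%:Z q = g%:Z by [].
case/dvdzP: d2p => c hc.
set j := `|((c * v) %% N%:Z)%Z|%N.
have EJ : E A (2%:Z * p) = ((E A q) ^+ j)%g.
  rewrite EX; apply: Emod; rewrite -/N.
  rewrite hc -gz -huv /j Eabs modzMmr.
  have -> : c * (u * N%:Z + v * q) = (c * u) * N%:Z + q * (c * v) by ring.
  by rewrite modzMDl.
have cQ : commute (E A q) (S * A * S^-1)%g.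
  have c1 : commute (E A q ^ S)%g A.
    rewrite conjgE mulgA h2; apply: commute_sym; apply: commuteM => //.
    by apply: commuteX.
  have := @commuteJ' _ _ _ (S^-1)%g c1; rewrite conjgK.
  by rewrite conjgE invgK mulgA.
have cUV : commute (E A (2%:Z * p)) (S * A * S^-1)%g.
  by rewrite EJ; apply: commute_sym; apply: commuteX; apply: commute_sym.
by apply/eqP; move/commgP: cUV; rewrite /commg /conjg !mulgA.
Qed.

Local Close Scope ring_scope.

Theorem theorem3p3 (p q : int) :
  p <> 0%R -> q <> 0%R -> ~~ (q %| (2%:Z * p)%R)%Z ->
  ~ residually_finite (Gpq_rels p q).
Proof.
move=> p0 q0 nd rf.
have p0' : (p != 0)%R by apply/eqP.
have q0' : (q != 0)%R by apply/eqP.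
have [gT [f [resp ne]]] := rf (wit p) (@wit_nontriv p q p0' q0' nd).
by apply: ne; exact: (@finite_kill gT f p q q0' resp).
Qed.
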